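(* Let $X$ and $Y$ be random variables having the same support, and let $\mathbf{q}=(q_1,q_2)$, where $q_i:[0,1]\to[0,1]$, $i=1,2$, are distortion functions such that $\hat G_X(\mathbf q)$ and $\hat G_Y(\mathbf q)$ are finite. Then: 1. $\hat G_{X+\delta}(\mathbf q)=\hat G_X(\mathbf q)$ for all $\delta\in\mathbb{R}$; 2. $\hat G_{\gamma X}(\mathbf q)=\gamma\hat G_X(\mathbf q)$ for all $\gamma>0$; 3. $\hat G_X(\mathbf q)=0$ for any degenerate random variable $X$; 4. $\hat G_X(\mathbf q)\ge0$ for any random variable $X$; 5. $X\le_d Y$ implies $\hat G_X(\mathbf q)\le\hat G_Y(\mathbf q)$.
   Context: A distortion function is an increasing (non-strict) function $q:[0,1]\to[0,1]$ with $q(0)=0$ and $q(1)=1$. For a random variable $X$ with CDF $F$ and survival function $\overline F=1-F$, with $l=\inf\{x:F(x)>0\}$ and $r=\sup\{x:\overline F(x)>0\}$, the $\mathbf q$-distorted Gini function is $\hat G_X(\mathbf q)=\int_l^r q_1(F(x))\,q_2(\overline F(x))\,dx$. With $F^{-1}(u)=\sup\{x:F(x)\le u\}$ and $G^{-1}$ the analogous quantile function of $Y$ (CDF $G$), $X$ is smaller than $Y$ in the dispersive order, $X\le_d Y$, iff $F^{-1}(v)-F^{-1}(u)\le G^{-1}(v)-G^{-1}(u)$ whenever $0<u\le v<1$. *)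

(* Defs.v *)
From HB Require Import structures.
From mathcomp Require Import all_boot all_order all_algebra.
From mathcomp Require Import all_classical all_reals all_analysis.
Set Implicit Arguments. Unset Strict Implicit. Unset Printing Implicit Defensive.
Import Order.TTheory GRing.Theory Num.Theory.
Import numFieldNormedType.Exports.
Local Open Scope classical_set_scope.
Local Open Scope ring_scope.

Section Defs.
Context {R : realType}.

(* distortion function: increasing q : [0,1] -> [0,1], q 0 = 0, q 1 = 1
   (only its values on [0,1] are ever used) *)
Definition distortion (q : R -> R) : Prop :=
  [/\ q 0 = 0, q 1 = 1,
      {in `[0, 1]&, {homo q : x y / x <= y}} &
      (forall u, 0 <= u <= 1 -> 0 <= q u <= 1)].

Definition cdfR d (T : measurableType d) (P : probability T R)
  (X : {RV P >-> R}) (x : R) : R := fine (cdf X x).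

Definition lend (F : R -> R) : \bar R :=
  ereal_inf [set x%:E | x in [set x : R | 0 < F x]].
Definition rend (F : R -> R) : \bar R :=
  ereal_sup [set x%:E | x in [set x : R | 0 < 1 - F x]].

Definition dgini_cdf (q1 q2 : R -> R) (F : R -> R) : \bar R :=
  (\int[lebesgue_measure]_(x in [set x : R | (lend F < x%:E)%E && (x%:E < rend F)%E])
     (q1 (F x) * q2 (1 - F x))%:E)%E.

Definition dgini d (T : measurableType d) (P : probability T R)
  (q1 q2 : R -> R) (X : {RV P >-> R}) : \bar R :=
  dgini_cdf q1 q2 (cdfR X).

Definition quantile (F : R -> R) (u : R) : R := sup [set x : R | F x <= u].

Definition dispersive d1 (T1 : measurableType d1) (P1 : probability T1 R)
  (X : {RV P1 >-> R}) d2 (T2 : measurableType d2) (P2 : probability T2 R)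
  (Y : {RV P2 >-> R}) : Prop :=
  forall u v : R, 0 < u -> u <= v -> v < 1 ->
    quantile (cdfR X) v - quantile (cdfR X) u <=
    quantile (cdfR Y) v - quantile (cdfR Y) u.

Definition rv_support d (T : measurableType d) (P : probability T R)
  (X : {RV P >-> R}) : set R :=
  [set x : R | forall e : R, 0 < e -> (0 < P (X @^-1` `]((x - e)%R), ((x + e)%R)[))%E].

Definition degenerate d (T : measurableType d) (P : probability T R)
  (X : {RV P >-> R}) : Prop :=
  exists c : R, P [set w | X w = c] = 1%E.

End Defs.

(* Main.v *)
Require Import Defs.
From HB Require Import structures.
From mathcomp Require Import all_boot all_order all_algebra.
From mathcomp Require Import all_classical all_reals all_analysis.
From mathcomp Require Import ring lra measurable_realfun.
Import Order.TTheory GRing.Theory Num.Theory.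
Import numFieldNormedType.Exports.
Local Open Scope classical_set_scope.
Local Open Scope ring_scope.
Definition mpush d1 d2 (T1 : measurableType d1) (T2 : measurableType d2) (R : realType)
  (m : {measure set T1 -> \bar R}) (f : {mfun T1 >-> T2}) := pushforward m f.
Arguments mpush {d1 d2 T1 T2 R} m f.
Section mpush2.
Context d1 d2 (T1 : measurableType d1) (T2 : measurableType d2) (R : realType)
  (m : {measure set T1 -> \bar R}) (f : {mfun T1 >-> T2}).
Local Open Scope ereal_scope.
Let mpush0 : mpush m f set0 = 0.
Proof. by rewrite /mpush /pushforward preimage_set0 measure0. Qed.
Let mpush_ge0 A : 0 <= mpush m f A.
Proof. exact: measure_ge0. Qed.
Let mpush_sa : semi_sigma_additive (mpush m f).
Proof.
move=> F mF tF mUF; rewrite /mpush /pushforward preimage_bigcup.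
apply: measure_semi_sigma_additive.
- by move=> n; rewrite -[X in measurable X]setTI; exact: measurable_funPT.
- apply/trivIsetP => /= i j _ _ ij; rewrite -preimage_setI.
  by move/trivIsetP : tF => /(_ _ _ _ _ ij) ->//; rewrite preimage_set0.
- by rewrite -preimage_bigcup -[X in measurable X]setTI; exact: measurable_funPT.
Qed.
HB.instance Definition _ := isMeasure.Build _ _ _ (mpush m f) mpush0 mpush_ge0 mpush_sa.
End mpush2.
Section S.
Context {R : realType}.
Local Open Scope ereal_scope.
Import HBNNSimple.

Lemma le_integral_measure d (T : measurableType d)
  (m1 m2 : {measure set T -> \bar R}) (D : set T) (f : T -> \bar R) :
  (forall S, measurable S -> S `<=` D -> m1 S <= m2 S) ->
  (forall x, D x -> 0 <= f x) ->
  \int[m1]_(x in D) f x <= \int[m2]_(x in D) f x.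
Proof.
move=> m12 f0; rewrite !ge0_integralE//.
apply: ge_ereal_sup => _ [h hf <-].
apply: le_trans (ereal_sup_ubound _); last by exists h.
rewrite !sintegralE; apply: lee_fsum => // r [t _ <-].
have [ht0|ht0] := leP (h t) 0%R.
  have -> : h t = 0%R by apply/eqP; rewrite eq_le ht0 fun_ge0.
  by rewrite !mul0e.
apply: lee_wpmul2l; first by rewrite lee_fin ltW.
apply: m12; first exact: measurable_sfunP.
move=> s /= hs; have := hf s; rewrite /patch; case: ifPn => [/set_mem//|_].
by rewrite hs lee_fin leNgt ht0.
Qed.

Lemma leb_of_itv (mu : {measure set (measurableTypeR R) -> \bar R}) (c : R) : (0 < c)%R ->
  (forall a b : R, (a < b)%R -> c%:E * mu `]a, b]%classic <= (b - a)%:E) ->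
  forall S, measurable S -> c%:E * mu S <= lebesgue_measure S.
Proof.
move=> c0 hab S mS.
rewrite /lebesgue_measure /lebesgue_stieltjes_measure /measure_extension /=.
apply: le_ereal_inf_tmp => _ [C [mC SC] <-].
have mC' k : measurable (C k : set R).
  by have [[a b] _ <-] := mC k; exact: measurable_itv.
apply: (@le_trans _ _ (c%:E * \sum_(k <oo) mu (C k))).
  rewrite lee_pmul2l ?lte_fin//.
  exact: measure_sigma_subadditive.
rewrite -nneseriesZl//; apply: lee_nneseries => k _.
  by rewrite mule_ge0// lee_fin ltW.
have [[a b] _ Cab] := mC k; rewrite -Cab wlength_itv /=.
have [ab|ba] := ltP a b.
  by rewrite /= lte_fin ab -EFinB; exact: hab.
rewrite set_itv_ge ?measure0 ?mule0.
  by rewrite lte_fin ltNge ba.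
by rewrite bnd_simp -leNgt.
Qed.
Lemma expand_bound (A : set R) (phi : R -> R) (c : R) : (0 < c)%R ->
  measurable A -> measurable_fun A phi ->
  {in A &, forall x y, (x <= y)%R -> (c * (y - x) <= phi y - phi x)%R} ->
  forall a b : R, (a < b)%R ->
  c%:E * lebesgue_measure (A `&` phi @^-1` `]a, b]%classic) <= (b - a)%:E.
Proof.
move=> c0 mA mphi hphi a b ab.
set E := A `&` _.
have mE : measurable E by apply: mphi => //; exact: measurable_itv.
pose L := ((b - a) / c)%R.
have L0 : (0 <= L)%R by rewrite divr_ge0// ?subr_ge0 ?ltW.
have cL : (c * L = b - a)%R by rewrite /L mulrCA mulfV ?mulr1// gt_eqF.
have [->|/set0P[x0 Ex0]] := eqVneq E set0.
  by rewrite measure0 mule0 lee_fin subr_ge0 ltW.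
- have key x y : E x -> E y -> (x - y <= L)%R.
    move=> [Ax /=]; rewrite in_itv/= => /andP[ax xb].
    move=> [Ay /=]; rewrite in_itv/= => /andP[ay yb].
    have [xy|yx] := leP x y.
      by apply: le_trans L0; rewrite subr_le0.
    rewrite -(ler_pM2l c0) cL.
    apply: (le_trans (hphi y x (mem_set Ay) (mem_set Ax) (ltW yx))).
    exact: lerB xb (ltW ay).
  have hlb : has_lbound E.
    by exists (x0 - L)%R => y Ey; rewrite lerBlDr addrC -lerBlDr key.
  have sub : E `<=` `[inf E, (inf E + L)%R]%classic.
    move=> y Ey /=; rewrite in_itv/=; apply/andP; split.
      exact: ge_inf.
    rewrite -lerBlDr; apply: lb_le_inf; first by exists x0.
    by move=> z Ez; rewrite lerBlDr addrC -lerBlDr key.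
  apply: (@le_trans _ _ (c%:E * lebesgue_measure `[inf E, (inf E + L)%R]%classic)).
    by rewrite lee_pmul2l ?lte_fin// le_measure// inE//.
  rewrite lebesgue_measure_itv/= lte_fin.
  have [_|_] := ltP (inf E) (inf E + L)%R.
    by rewrite -EFinB addrAC subrr add0r -EFinM cL.
  by rewrite mule0 lee_fin subr_ge0 ltW.
Qed.
Local Close Scope ereal_scope.
Lemma mono_in_measurable (A : set R) (f : R -> R) : is_interval A ->
  {in A &, {homo f : x y / x <= y}} -> measurable_fun A f.
Proof.
move=> iA ndf.
apply: (measurability (@measurable_realfun.RGenCInfty.G R)) => [|/= _ [_] [r] -> <-].
  exact: measurable_realfun.RGenCInfty.measurableE.
apply: measurable_realfun.is_interval_measurable => s t [As /=] + [At /=] + u /andP[su ut].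
rewrite !in_itv/= !andbT => fs ft; have Au : A u by apply: (iA s t As At u); rewrite su ut.
split => //; apply: (le_trans fs); apply: ndf => //; exact: mem_set.
Qed.

Definition Aset (F : R -> R) : set R :=
  [set x : R | (lend F < x%:E)%E && (x%:E < rend F)%E].

Lemma Aset_interval F : is_interval (Aset F).
Proof.
move=> x y /andP[lx _] /andP[_ yr] z /andP[xz zy]; apply/andP; split.
  by apply: (lt_le_trans lx); rewrite lee_fin.
by apply: le_lt_trans yr; rewrite lee_fin.
Qed.

Lemma Aset_pos F : {homo F : x y / x <= y} -> forall x, Aset F x -> 0 < F x.
Proof.
move=> ndF x /andP[lx _]; have [_ [z /= Fz <-]] := ereal_inf_lt lx.
by rewrite lte_fin => zx; apply: (lt_le_trans Fz); apply: ndF; apply: ltW.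
Qed.

Lemma Aset_lt1 F : {homo F : x y / x <= y} -> forall x, Aset F x -> F x < 1.
Proof.
move=> ndF x /andP[_ xr]; have [_ [z /= Fz <-]] := ereal_sup_gt xr.
rewrite lte_fin => xz; rewrite subr_gt0 in Fz.
by apply: le_lt_trans Fz; apply: ndF; apply: ltW.
Qed.

Lemma Aset_left F : forall x, Aset F x -> exists2 x', Aset F x' & x' < x.
Proof.
move=> x /andP[lx xr]; have [_ [z /= Fz <-]] := ereal_inf_lt lx.
rewrite lte_fin => zx; exists ((z + x) / 2).
  apply/andP; split; last first.
    by apply: le_lt_trans xr; rewrite lee_fin; lra.
  apply: (@le_lt_trans _ _ z%:E).
    by apply: ereal_inf_lbound; exists z.
  by rewrite lte_fin; lra.
lra.
Qed.

Lemma Aset_right F : forall x, Aset F x -> exists2 x', Aset F x' & x < x'.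
Proof.
move=> x /andP[lx xr]; have [_ [z /= Fz <-]] := ereal_sup_gt xr.
rewrite lte_fin => xz; exists ((z + x) / 2).
  apply/andP; split.
    by apply: lt_le_trans lx _; rewrite lee_fin; lra.
  apply: (@lt_le_trans _ _ z%:E).
    by rewrite lte_fin; lra.
  by apply: ereal_sup_ubound; exists z.
lra.
Qed.

End S.
Arguments mono_in_measurable {R} [A f].
Arguments Aset_pos {R} [F] _ [x].
Arguments Aset_lt1 {R} [F] _ [x].
Arguments Aset_left {R} [F x].
Arguments Aset_right {R} [F x].
Section S.
Context {R : realType}.

Lemma transfer (q1 q2 F G phi : R -> R) (c : R) :
  distortion q1 -> distortion q2 ->
  {homo F : x y / x <= y} -> {homo G : x y / x <= y} ->
  (forall x, 0 <= G x <= 1) -> 0 < c ->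
  {in Aset F &, forall x y, x <= y -> c * (y - x) <= phi y - phi x} ->
  {in Aset F, forall x, G (phi x) = F x} ->
  (c%:E * dgini_cdf q1 q2 F <= dgini_cdf q1 q2 G)%E.
Proof.
move=> [q10 q11 q1m q1r] [q20 q21 q2m q2r] ndF ndG G01 c0 hphi hG.
have mA : measurable (Aset F) := measurable_realfun.is_interval_measurable (Aset_interval F).
have mB : measurable (Aset G) := measurable_realfun.is_interval_measurable (Aset_interval G).
have ndphi : {in Aset F &, {homo phi : x y / x <= y}}.
  move=> x y Ax Ay xy; have := hphi x y Ax Ay xy.
  have : 0 <= c * (y - x) by apply: mulr_ge0; [exact: ltW|rewrite subr_ge0].
  move=> h1 h2; apply/(@le_trans _ _ (phi x + c * (y - x))); first by rewrite lerDl.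
  by rewrite -lerBrDl.
have mphi : measurable_fun (Aset F) phi := mono_in_measurable (Aset_interval F) ndphi.
have phiB x : Aset F x -> Aset G (phi x).
  move=> Ax; have [x' Ax' x'x] := Aset_left Ax; have [x'' Ax'' xx''] := Aset_right Ax.
  have Fx'0 := Aset_pos ndF Ax'; have Fx''1 := Aset_lt1 ndF Ax''.
  have lt1 : phi x' < phi x.
    rewrite -subr_gt0; apply: lt_le_trans (hphi x' x (mem_set Ax') (mem_set Ax) (ltW x'x)).
    by rewrite mulr_gt0// subr_gt0.
  have lt2 : phi x < phi x''.
    rewrite -subr_gt0; apply: lt_le_trans (hphi x x'' (mem_set Ax) (mem_set Ax'') (ltW xx'')).
    by rewrite mulr_gt0// subr_gt0.
  apply/andP; split.
    apply: (@le_lt_trans _ _ (phi x')%:E); last by rewrite lte_fin.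
    by apply: ereal_inf_lbound; exists (phi x') => //=; rewrite hG// inE.
  apply: (@lt_le_trans _ _ (phi x'')%:E); first by rewrite lte_fin.
  by apply: ereal_sup_ubound; exists (phi x'') => //=; rewrite hG ?inE// subr_gt0.
pose phit := phi \_ (Aset F).
have mphit : measurable_fun setT phit := (measurable_restrictT _ mA).1 mphi.
have mphit' : @measurable_fun _ _ (measurableTypeR R) (measurableTypeR R) setT phit := mphit.
pose phim : {mfun measurableTypeR R >-> measurableTypeR R} :=
  HB.pack (phit : measurableTypeR R -> measurableTypeR R)
    (isMeasurableFun.Build _ _ (measurableTypeR R) (measurableTypeR R) phit mphit).
pose g y := (q1 (G y) * q2 (1 - G y))%:E.
have g0 y : (0 <= g y)%E.
  have /andP[G0 G1] := G01 y.
  rewrite lee_fin mulr_ge0//.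
    by have /andP[] := q1r (G y) (G01 y).
  have : 0 <= 1 - G y <= 1 by rewrite subr_ge0 G1 lerBlDr lerDl G0.
  by move=> /q2r /andP[].
have Gi y : G y \in `[0, 1] by rewrite in_itv/= G01.
have G1i y : 1 - G y \in `[0, 1].
  by have /andP[G0 G1] := G01 y; rewrite in_itv/= subr_ge0 G1 lerBlDr lerDl G0.
have mg : measurable_fun [set: R] g.
  apply/measurable_EFinP; apply: measurable_funM.
  - apply: nondecreasing_measurable => // x y xy; apply: q1m => //; exact: ndG.
  - apply: nonincreasing_measurable => // x y xy; apply: q2m => //.
    by rewrite lerB// ndG.
have mg' : @measurable_fun _ _ (measurableTypeR R) _ setT g := mg.
have hk : (0 <= c) by exact: ltW.
pose k : {nonneg R} := NngNum hk.
pose mu := mpush (mrestr lebesgue_measure mA) phim.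
have phitE x : Aset F x -> phit x = phi x.
  by move=> Ax; rewrite /phit /patch ifT// inE.
have E1 : dgini_cdf q1 q2 F = (\int[lebesgue_measure]_(x in Aset F) (g \o phit) x)%E.
  rewrite /dgini_cdf; apply: eq_integral => x /[1!inE] Ax.
  by rewrite /g /= phitE// hG// inE.
have E2 : (\int[lebesgue_measure]_(x in Aset F) (g \o phit) x <=
    \int[mrestr lebesgue_measure mA]_(x in Aset F) (g \o phit) x)%E.
  apply: le_integral_measure => [S mS SA|x _]; last exact: g0.
  by rewrite /= /mrestr setIidl.
have mphiB : measurable (phit @^-1` Aset G).
  by have := mphit measurableT _ mB; rewrite setTI.
have E3 : (\int[mrestr lebesgue_measure mA]_(x in Aset F) (g \o phit) x <=
    \int[mrestr lebesgue_measure mA]_(x in phit @^-1` Aset G) (g \o phit) x)%E.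
  apply: ge0_subset_integral => //.
  - exact/measurable_funTS/measurableT_comp.
  - by move=> x _; exact: g0.
  - by move=> x Ax /=; rewrite phitE//; exact: phiB.
have E4 : (\int[mrestr lebesgue_measure mA]_(x in phit @^-1` Aset G) (g \o phit) x =
    \int[mu]_(y in Aset G) g y)%E.
  symmetry; rewrite (ge0_integral_pushforward mphit') //.
  exact: measurable_funTS mg'.
have E5 : (c%:E * \int[mu]_(y in Aset G) g y = \int[mscale k mu]_(y in Aset G) g y)%E.
  by rewrite ge0_integral_mscale//; exact: measurable_funTS mg'.
have E6 : (\int[mscale k mu]_(y in Aset G) g y <= \int[lebesgue_measure]_(y in Aset G) g y)%E.
  apply: le_integral_measure => [S mS _|y _]; last exact: g0.
  suff H : forall a b : R, (a < b)%R -> (c%:E * mu `]a, b]%classic <= (b - a)%:E)%E.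
    exact (leb_of_itv mu c c0 H S mS).
  move=> a b ab.
  change (c%:E * lebesgue_measure (phit @^-1` `]a, b]%classic `&` Aset F) <= (b - a)%:E)%E.
  have -> : phit @^-1` `]a, b]%classic `&` Aset F = Aset F `&` phi @^-1` `]a, b]%classic.
    apply/seteqP; split => x [] /=.
      by move=> h Ax; split => //; rewrite -phitE.
    by move=> Ax h; split => //; rewrite phitE.
  exact: expand_bound.
rewrite E1; apply: (@le_trans _ _ (c%:E * \int[mu]_(y in Aset G) g y)%E).
  rewrite -E4; apply: lee_wpmul2l; first by rewrite lee_fin.
  exact: le_trans E2 E3.
rewrite E5; exact: E6.
Qed.
End S.
Section Q.
Context {R : realType}.
Variable F : R -> R.
Hypothesis ndF : {homo F : x y / x <= y}.
Hypothesis hlo : forall u, 0 < u -> exists x, F x < u.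
Hypothesis hhi : forall u, u < 1 -> exists z, u < F z.
Hypothesis hrc : forall y u, (forall z, y < z -> u <= F z) -> u <= F y.

Let Q := quantile F.

Lemma Qset_ub u : u < 1 -> has_ubound [set x | F x <= u].
Proof.
move=> u1; have [z uz] := hhi u u1; exists z => x /= Fxu.
rewrite leNgt; apply/negP => zx.
by have := lt_le_trans uz (ndF _ _ (ltW zx)); rewrite ltNge Fxu.
Qed.

Lemma Qset_ne u : 0 < u -> [set x | F x <= u] !=set0.
Proof. by move=> u0; have [x Fx] := hlo u u0; exists x; exact: ltW. Qed.

Lemma Q1 u x : u < 1 -> F x <= u -> x <= Q u.
Proof. by move=> u1 Fxu; apply: ub_le_sup => //; exact: Qset_ub. Qed.

Lemma Q2 u x : 0 < u -> u < F x -> Q u <= x.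
Proof.
move=> u0 uFx; apply: ge_sup; first exact: Qset_ne.
move=> z /= Fzu; rewrite leNgt; apply/negP => xz.
by have := lt_le_trans uFx (ndF _ _ (ltW xz)); rewrite ltNge Fzu.
Qed.

Lemma Q3 u : u < 1 -> u <= F (Q u).
Proof.
move=> u1; apply: hrc => z Qz; rewrite leNgt; apply/negP => Fzu.
by have := Q1 u z u1 (ltW Fzu); rewrite leNgt Qz.
Qed.

Lemma Q4 u v : 0 < u -> u <= v -> v < 1 -> Q u <= Q v.
Proof.
move=> u0 uv v1; apply: ge_sup; first exact: Qset_ne.
by move=> x /= Fxu; apply: Q1 => //; exact: le_trans uv.
Qed.

Lemma quantile_facts :
  [/\ (forall u x, u < 1 -> F x <= u -> x <= quantile F u),
      (forall u x, 0 < u -> u < F x -> quantile F u <= x),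
      (forall u, u < 1 -> u <= F (quantile F u)) &
      (forall u v, 0 < u -> u <= v -> v < 1 -> quantile F u <= quantile F v)].
Proof. split; [exact: Q1|exact: Q2|exact: Q3|exact: Q4]. Qed.

End Q.

Section cdfR.
Context d (T : measurableType d) {R : realType} (P : probability T R) (X : {RV P >-> R}).

Lemma cdfRE x : (cdfR X x)%:E = cdf X x.
Proof.
rewrite /cdfR fineK//; apply/fin_numPlt/andP; split.
  by apply: (lt_le_trans (ltNyr 0%R)); exact: cdf_ge0.
by apply: (le_lt_trans (cdf_le1 X x)); exact: ltry.
Qed.

Lemma cdfR01 x : 0 <= cdfR X x <= 1.
Proof. by rewrite -!lee_fin cdfRE cdf_ge0 cdf_le1. Qed.

Lemma cdfR_nd : {homo cdfR X : x y / x <= y}.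
Proof. by move=> x y xy; rewrite -lee_fin !cdfRE; exact: cdf_nondecreasing. Qed.

Lemma cdfR_lo u : 0 < u -> exists x, cdfR X x < u.
Proof.
move=> u0.
have h : cdfR X x @[x --> -oo] --> 0.
  by apply: (fine_cvg (f:=cdf X)); exact: cvg_cdfNy0.
have h2 : \forall x \near -oo, cdfR X x < u := h [set t | t < u] (lt_nbhsl u0).
near (-oo : set_system R) => x; exists x; near: x; exact: h2.
Unshelve. all: by end_near. Qed.

Lemma cdfR_hi u : u < 1 -> exists x, u < cdfR X x.
Proof.
move=> u1.
have h : cdfR X @ (+oo : set_system R) --> (1:R).
  by apply: (fine_cvg (f:=cdf X)); exact: cvg_cdfy1.
have h2 : \forall x \near +oo, u < cdfR X x := h [set t | u < t] (lt_nbhsr u1).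
near (+oo : set_system R) => x; exists x; near: x; exact: h2.
Unshelve. all: by end_near. Qed.

Lemma cdfR_rc y u : (forall z, y < z -> u <= cdfR X z) -> u <= cdfR X y.
Proof.
move=> hz; rewrite leNgt; apply/negP => Fyu.
have h : cdfR X x @[x --> y^'+] --> cdfR X y.
  apply: (fine_cvg (f:=cdf X)); rewrite cdfRE.
  exact: cdf_right_continuous.
have h2 : \forall x \near y^'+, cdfR X x < u := h [set t | t < u] (lt_nbhsl Fyu).
have [z [yz zu]] : exists z, y < z /\ cdfR X z < u.
  near y^'+ => z; exists z; split; near: z; [exact: nbhs_right_gt| exact: h2].
by have := hz z yz; rewrite leNgt zu.
Unshelve. all: by end_near. Qed.

End cdfR.
Arguments cdfR_nd {d T R P}.
Arguments cdfR01 {d T R P}.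
Arguments cdfR_lo {d T R P}.
Arguments cdfR_hi {d T R P}.
Arguments cdfR_rc {d T R P}.
Arguments cdfRE {d T R P}.

Theorem theorem2 (R : realType)
  (d1 : measure_display) (T1 : measurableType d1) (P1 : probability T1 R)
  (X : {RV P1 >-> R})
  (d2 : measure_display) (T2 : measurableType d2) (P2 : probability T2 R)
  (Y : {RV P2 >-> R})
  (q1 q2 : R -> R) :
  distortion q1 -> distortion q2 ->
  rv_support X = rv_support Y ->
  dgini q1 q2 X \is a fin_num -> dgini q1 q2 Y \is a fin_num ->
  [/\ (* 1. location invariance *)
      (forall (delta : R) (Xd : {RV P1 >-> R}),
         (forall w, Xd w = X w + delta) -> dgini q1 q2 Xd = dgini q1 q2 X),
      (* 2. positive homogeneity *)
      (forall (gamma : R) (Xg : {RV P1 >-> R}), 0 < gamma ->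
         (forall w, Xg w = gamma * X w) ->
         dgini q1 q2 Xg = (gamma%:E * dgini q1 q2 X)%E),
      (* 3. degenerate variables *)
      (degenerate X -> dgini q1 q2 X = 0%E),
      (* 4. nonnegativity *)
      (0 <= dgini q1 q2 X)%E &
      (* 5. monotonicity w.r.t. the dispersive order *)
      (dispersive X Y -> (dgini q1 q2 X <= dgini q1 q2 Y)%E)].
Proof.
move=> hq1 hq2 _ _ _.
have cdfP (Z : {RV P1 >-> R}) x : cdfR Z x = fine (P1 (Z @^-1` `]-oo, x]%classic)).
  by [].
split.
- move=> delta Xd hXd.
  have E x : cdfR Xd x = cdfR X (x - delta).
    rewrite !cdfP; congr (fine (P1 _)); apply/seteqP; split => w /=;
      rewrite !in_itv/= hXd; lra.
  apply/eqP; rewrite eq_le; apply/andP; split.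
  + have := @transfer R q1 q2 (cdfR Xd) (cdfR X) (fun x => x - delta) 1 hq1 hq2
      (cdfR_nd Xd) (cdfR_nd X) (cdfR01 X) ltr01.
    rewrite mul1e; apply.
    * by move=> x y _ _ xy; lra.
    * by move=> x _; rewrite E.
  + have := @transfer R q1 q2 (cdfR X) (cdfR Xd) (fun x => x + delta) 1 hq1 hq2
      (cdfR_nd X) (cdfR_nd Xd) (cdfR01 Xd) ltr01.
    rewrite mul1e; apply.
    * by move=> x y _ _ xy; lra.
    * by move=> x _; rewrite E addrK.
- move=> gamma Xg g0 hXg.
  have E x : cdfR Xg x = cdfR X (x / gamma).
    rewrite !cdfP; congr (fine (P1 _)); apply/seteqP; split => w /=;
      rewrite !in_itv/= hXg ler_pdivlMr// [gamma * _]mulrC; exact: id.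
  have gV0 : 0 < gamma^-1 by rewrite invr_gt0.
  have h1 := @transfer R q1 q2 (cdfR X) (cdfR Xg) (fun x => gamma * x) gamma hq1 hq2
      (cdfR_nd X) (cdfR_nd Xg) (cdfR01 Xg) g0.
  have h2 := @transfer R q1 q2 (cdfR Xg) (cdfR X) (fun x => x / gamma) gamma^-1 hq1 hq2
      (cdfR_nd Xg) (cdfR_nd X) (cdfR01 X) gV0.
  have {}h1 : (gamma%:E * dgini q1 q2 X <= dgini q1 q2 Xg)%E.
    apply: h1.
    * by move=> x y _ _ xy; rewrite mulrBr.
    * by move=> x _; rewrite E mulrAC mulfV ?gt_eqF ?mul1r.
  have {}h2 : (gamma^-1%:E * dgini q1 q2 Xg <= dgini q1 q2 X)%E.
    apply: h2.
    * by move=> x y _ _ xy; rewrite -mulrBl mulrC.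
    * by move=> x _; rewrite E.
  apply/eqP; rewrite eq_le h1 andbT.
  have hg : (0 <= gamma%:E)%E by rewrite lee_fin ltW.
  have := lee_wpmul2l hg h2.
  by rewrite muleA -EFinM mulfV ?gt_eqF// mul1e.
- move=> [c Pc].
  have A0 : Aset (cdfR X) = set0.
    apply/seteqP; split => // x Ax.
    have Fx0 := Aset_pos (cdfR_nd X) Ax; have Fx1 := Aset_lt1 (cdfR_nd X) Ax.
    have mXc : measurable (X @^-1` [set c]).
      by rewrite -[X in measurable X]setTI; apply: measurable_funPT.
    have mXx : measurable (X @^-1` `]-oo, x]%classic).
      by rewrite -[X in measurable X]setTI; apply: measurable_funPT.
    have hF : (cdfR X x)%:E = P1 (X @^-1` `]-oo, x]%classic) by rewrite cdfRE.
    have [xc|cx] := ltP x c.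
    + have disj : X @^-1` `]-oo, x]%classic `&` X @^-1` [set c] = set0.
        apply/seteqP; split => // w [/=]; rewrite in_itv/= => + Xwc.
        by rewrite Xwc leNgt xc.
      have hU : P1 (X @^-1` `]-oo, x]%classic `|` X @^-1` [set c]) =
          (P1 (X @^-1` `]-oo, x]%classic) + P1 (X @^-1` [set c]))%E.
        exact (measureU P1 mXx mXc disj).
      rewrite -hF Pc in hU.
      have := probability_le1 P1 (measurableU _ _ mXx mXc).
      rewrite hU -EFinD lee_fin; lra.
    + have : (P1 (X @^-1` [set c]) <= P1 (X @^-1` `]-oo, x]%classic))%E.
        apply: le_measure; rewrite ?inE//.
        by move=> w /= ->; rewrite in_itv/= cx.
      rewrite -hF Pc lee_fin; lra.
  rewrite /dgini /dgini_cdf.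
  change (\int[lebesgue_measure]_(x in Aset (cdfR X)) (q1 (cdfR X x) * q2 (1 - cdfR X x))%:E = 0)%E.
  by rewrite A0 integral_set0.
- case: hq1 => _ _ _ q1r; case: hq2 => _ _ _ q2r.
  rewrite /dgini /dgini_cdf; apply: integral_ge0 => x _; rewrite lee_fin.
  have /andP[F0 F1] := cdfR01 X x.
  apply: mulr_ge0.
    by have /andP[] := q1r _ (cdfR01 X x).
  have : 0 <= 1 - cdfR X x <= 1 by apply/andP; split; lra.
  by move=> /q2r /andP[].
- move=> disp.
  have [QX1 QX2 QX3 QX4] := quantile_facts _ (cdfR_nd X) (cdfR_lo X) (cdfR_hi X) (cdfR_rc X).
  have [QY1 QY2 QY3 QY4] := quantile_facts _ (cdfR_nd Y) (cdfR_lo Y) (cdfR_hi Y) (cdfR_rc Y).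
  pose QX := quantile (cdfR X); pose QY := quantile (cdfR Y).
  pose phi x := x + QY (cdfR X x) - QX (cdfR X x).
  have := @transfer R q1 q2 (cdfR X) (cdfR Y) phi 1 hq1 hq2
      (cdfR_nd X) (cdfR_nd Y) (cdfR01 Y) ltr01.
  rewrite mul1e; apply.
  + move=> x y; rewrite !inE => Ax Ay xy.
    have u0 := Aset_pos (cdfR_nd X) Ax; have v1 := Aset_lt1 (cdfR_nd X) Ay.
    have uv := cdfR_nd X _ _ xy.
    have := disp _ _ u0 uv v1; rewrite /phi -/QX -/QY; lra.
  + move=> x; rewrite inE => Ax.
    have u0 := Aset_pos (cdfR_nd X) Ax; have u1 := Aset_lt1 (cdfR_nd X) Ax.
    have /andP[Gy0 Gy1] := cdfR01 Y (phi x).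
    apply/eqP; rewrite eq_le; apply/andP; split.
    * rewrite leNgt; apply/negP => uGy.
      pose w := (cdfR X x + cdfR Y (phi x)) / 2.
      have uw : cdfR X x < w by rewrite /w; lra.
      have wG : w < cdfR Y (phi x) by rewrite /w; lra.
      have w1 : w < 1 by lra.
      have w0 : 0 < w by lra.
      have h1 := QY2 w (phi x) w0 wG.
      have h2 := QY4 _ _ u0 (ltW uw) w1.
      have h3 := disp _ _ u0 (ltW uw) w1.
      have h4 : QX w <= x by move: h1 h2 h3; rewrite /phi -/QX -/QY; lra.
      have h5 := QX3 w w1.
      have h6 := cdfR_nd X _ _ h4.
      lra.
    * rewrite leNgt; apply/negP => Gyu.
      pose v := (cdfR Y (phi x) + cdfR X x) / 2.
      have vu : v < cdfR X x by rewrite /v; lra.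
      have Gv : cdfR Y (phi x) < v by rewrite /v; lra.
      have v0 : 0 < v by lra.
      have v1 : v < 1 by lra.
      have h1 := disp _ _ v0 (ltW vu) u1.
      have h2 := QX2 v x v0 vu.
      have h3 : QY v <= phi x by move: h1 h2; rewrite /phi -/QX -/QY; lra.
      have h4 := QY3 v v1.
      have h5 := cdfR_nd Y _ _ h3.
      lra.
Qed.
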